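(* For every integer $n\ge1$, $$J\mathcal{G}_{n+1}^{(3)}J\mathcal{G}_{n-1}^{(3)}-\left[J\mathcal{G}_{n}^{(3)}\right]^{2}=\frac{1}{49}\left[2^{n}\left(2\Theta Y_{n-1}(1)-Y_{n}(1)\Theta\right)-\left(\Xi+14\Omega\right)\right]$$ and $$K\mathcal{G}_{n+1}^{(3)}K\mathcal{G}_{n-1}^{(3)}-\left[K\mathcal{G}_{n}^{(3)}\right]^{2}=2^{n-1}\left[2\Theta Y^{*}_{n-1}(1)-Y^{*}_{n}(1)\Theta\right]-\left[\Xi^{*}+6\Omega\right],$$ where $Y_{m}(1)=X_{m}(2\mathbf{A}-\mathbf{B})-X_{m+1}(3\mathbf{B}+\mathbf{A})$, $Y^{*}_{m}(1)=X_{m}(2\mathbf{C}-\mathbf{D})-X_{m+1}(3\mathbf{D}+\mathbf{C})$, $\Xi=\mathbf{A}^2+\mathbf{A}\mathbf{B}+\mathbf{B}^2$ and $\Xi^{*}=\mathbf{C}^2+\mathbf{C}\mathbf{D}+\mathbf{D}^2$.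
   Context: Fix real numbers $\lambda_1,\lambda_2,\lambda_3$. The algebra $\mathbb{H}_{\lambda_1,\lambda_2,\lambda_3}$ of 3-parameter generalized quaternions is the real associative algebra of elements $\psi_0+\psi_1\mathbf{e}_1+\psi_2\mathbf{e}_2+\psi_3\mathbf{e}_3$ ($\psi_i\in\mathbb{R}$) with $\mathbf{e}_1^2=-\lambda_1\lambda_2$, $\mathbf{e}_2^2=-\lambda_1\lambda_3$, $\mathbf{e}_3^2=-\lambda_2\lambda_3$, $\mathbf{e}_1\mathbf{e}_2=-\mathbf{e}_2\mathbf{e}_1=\lambda_1\mathbf{e}_3$, $\mathbf{e}_1\mathbf{e}_3=-\mathbf{e}_3\mathbf{e}_1=-\lambda_2\mathbf{e}_2$, $\mathbf{e}_2\mathbf{e}_3=-\mathbf{e}_3\mathbf{e}_2=\lambda_3\mathbf{e}_1$. The third-order Jacobsthal numbers are $J_0^{(3)}=0$, $J_1^{(3)}=J_2^{(3)}=1$, $J_n^{(3)}=J_{n-1}^{(3)}+J_{n-2}^{(3)}+2J_{n-3}^{(3)}$ for $n\ge3$; the modified third-order Jacobsthal numbers are $K_0^{(3)}=3$, $K_1^{(3)}=1$, $K_2^{(3)}=3$, $K_n^{(3)}=K_{n-1}^{(3)}+K_{n-2}^{(3)}+2K_{n-3}^{(3)}$ for $n\ge3$. For $n\ge0$ define $J\mathcal{G}_n^{(3)}=J_n^{(3)}+J_{n+1}^{(3)}\mathbf{e}_1+J_{n+2}^{(3)}\mathbf{e}_2+J_{n+3}^{(3)}\mathbf{e}_3$ and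 $K\mathcal{G}_n^{(3)}=K_n^{(3)}+K_{n+1}^{(3)}\mathbf{e}_1+K_{n+2}^{(3)}\mathbf{e}_2+K_{n+3}^{(3)}\mathbf{e}_3$. Here $X_n=0,1,-1$ according as $n\equiv0,1,2\pmod 3$, $\Theta=1+2\mathbf{e}_1+4\mathbf{e}_2+8\mathbf{e}_3$, $\mathbf{A}=1+2\mathbf{e}_1-3\mathbf{e}_2+\mathbf{e}_3$, $\mathbf{B}=2-3\mathbf{e}_1+\mathbf{e}_2+2\mathbf{e}_3$, $\mathbf{C}=1-2\mathbf{e}_1+\mathbf{e}_2+\mathbf{e}_3$, $\mathbf{D}=-2+\mathbf{e}_1+\mathbf{e}_2-2\mathbf{e}_3$, and $\Omega=\lambda_3\mathbf{e}_1+\lambda_2\mathbf{e}_2+\lambda_1\mathbf{e}_3$. *)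

(* Defs.v *)
From Stdlib Require Import Reals Lra Lia.
Open Scope R_scope.

(* Elements psi0 + psi1 e1 + psi2 e2 + psi3 e3 of H_{l1,l2,l3}. *)
Record quat := Quat { q0 : R; q1 : R; q2 : R; q3 : R }.

Definition qadd (a b : quat) : quat :=
  Quat (q0 a + q0 b) (q1 a + q1 b) (q2 a + q2 b) (q3 a + q3 b).
Definition qopp (a : quat) : quat := Quat (- q0 a) (- q1 a) (- q2 a) (- q3 a).
Definition qsub (a b : quat) : quat := qadd a (qopp b).
Definition qscal (r : R) (a : quat) : quat :=
  Quat (r * q0 a) (r * q1 a) (r * q2 a) (r * q3 a).

(* Multiplication determined by bilinearity and the rules
   e1^2=-l1 l2, e2^2=-l1 l3, e3^2=-l2 l3,
   e1e2=-e2e1=l1 e3, e1e3=-e3e1=-l2 e2, e2e3=-e3e2=l3 e1. *)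
Definition qmul (l1 l2 l3 : R) (a b : quat) : quat :=
  Quat (q0 a * q0 b - l1 * l2 * q1 a * q1 b - l1 * l3 * q2 a * q2 b
          - l2 * l3 * q3 a * q3 b)
       (q0 a * q1 b + q1 a * q0 b + l3 * (q2 a * q3 b - q3 a * q2 b))
       (q0 a * q2 b + q2 a * q0 b + l2 * (q3 a * q1 b - q1 a * q3 b))
       (q0 a * q3 b + q3 a * q0 b + l1 * (q1 a * q2 b - q2 a * q1 b)).

Fixpoint Jac (n : nat) : R :=
  match n with
  | 0%nat => 0
  | 1%nat => 1
  | 2%nat => 1
  | S ((S (S m as q)) as p) => Jac p + Jac q + 2 * Jac m
  end.

Fixpoint Kac (n : nat) : R :=
  match n with
  | 0%nat => 3
  | 1%nat => 1
  | 2%nat => 3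
  | S ((S (S m as q)) as p) => Kac p + Kac q + 2 * Kac m
  end.

Definition JG (n : nat) : quat := Quat (Jac n) (Jac (n+1)) (Jac (n+2)) (Jac (n+3)).
Definition KG (n : nat) : quat := Quat (Kac n) (Kac (n+1)) (Kac (n+2)) (Kac (n+3)).

Definition Xs (n : nat) : R :=
  match (n mod 3)%nat with 0%nat => 0 | 1%nat => 1 | _ => -1 end.

Definition Theta : quat := Quat 1 2 4 8.
Definition qA : quat := Quat 1 2 (-3) 1.
Definition qB : quat := Quat 2 (-3) 1 2.
Definition qC : quat := Quat 1 (-2) 1 1.
Definition qD : quat := Quat (-2) 1 1 (-2).
Definition Omega (l1 l2 l3 : R) : quat := Quat 0 l3 l2 l1.

Definition Y1 (m : nat) : quat :=
  qsub (qscal (Xs m) (qsub (qscal 2 qA) qB))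
       (qscal (Xs (m+1)) (qadd (qscal 3 qB) qA)).
Definition Y1s (m : nat) : quat :=
  qsub (qscal (Xs m) (qsub (qscal 2 qC) qD))
       (qscal (Xs (m+1)) (qadd (qscal 3 qD) qC)).

Definition Xi (l1 l2 l3 : R) : quat :=
  qadd (qadd (qmul l1 l2 l3 qA qA) (qmul l1 l2 l3 qA qB)) (qmul l1 l2 l3 qB qB).
Definition Xis (l1 l2 l3 : R) : quat :=
  qadd (qadd (qmul l1 l2 l3 qC qC) (qmul l1 l2 l3 qC qD)) (qmul l1 l2 l3 qD qD).

(* Main.v *)
Require Import Defs.
From Stdlib Require Import Reals Lra Lia.
Open Scope R_scope.

Fixpoint Vj (j : nat) : R :=
  match j with 0%nat => 2 | 1%nat => -3 | 2%nat => 1 | S (S (S i)) => Vj i end.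
Fixpoint Wj (j : nat) : R :=
  match j with 0%nat => 2 | 1%nat => -1 | 2%nat => -1 | S (S (S i)) => Wj i end.

Lemma Jac_rec m : Jac (m+3) = Jac (m+2) + Jac (m+1) + 2 * Jac m.
Proof. replace (m+3)%nat with (S (S (S m))) by lia.
  replace (m+2)%nat with (S (S m)) by lia. replace (m+1)%nat with (S m) by lia.
  reflexivity. Qed.
Lemma Kac_rec m : Kac (m+3) = Kac (m+2) + Kac (m+1) + 2 * Kac m.
Proof. replace (m+3)%nat with (S (S (S m))) by lia.
  replace (m+2)%nat with (S (S m)) by lia. replace (m+1)%nat with (S m) by lia.
  reflexivity. Qed.

Lemma Jk k : Jac (3*k) = (2*8^k-2)/7 /\ Jac (3*k+1) = (4*8^k+3)/7
  /\ Jac (3*k+2) = (8*8^k-1)/7.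
Proof.
  induction k as [|k [H0 [H1 H2]]].
  - simpl. repeat split; field.
  - assert (E0 : Jac (3 * S k) = Jac (3*k+2) + Jac (3*k+1) + 2 * Jac (3*k)).
    { replace (3 * S k)%nat with (3*k+3)%nat by lia. apply Jac_rec. }
    assert (E1 : Jac (3 * S k + 1) = Jac (3 * S k) + Jac (3*k+2) + 2 * Jac (3*k+1)).
    { replace (3 * S k + 1)%nat with (3*k+1+3)%nat by lia. rewrite Jac_rec.
      replace (3*k+1+2)%nat with (3 * S k)%nat by lia.
      replace (3*k+1+1)%nat with (3*k+2)%nat by lia. reflexivity. }
    assert (E2 : Jac (3 * S k + 2) = Jac (3 * S k + 1) + Jac (3 * S k) + 2 * Jac (3*k+2)).
    { replace (3 * S k + 2)%nat with (3*k+2+3)%nat by lia. rewrite Jac_rec.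
      replace (3*k+2+2)%nat with (3 * S k + 1)%nat by lia.
      replace (3*k+2+1)%nat with (3 * S k)%nat by lia. reflexivity. }
    rewrite E2, E1, E0, H0, H1, H2. simpl pow. repeat split; field.
Qed.

Lemma Kk k : Kac (3*k) = 8^k+2 /\ Kac (3*k+1) = 2*8^k-1
  /\ Kac (3*k+2) = 4*8^k-1.
Proof.
  induction k as [|k [H0 [H1 H2]]].
  - simpl. repeat split; field.
  - assert (E0 : Kac (3 * S k) = Kac (3*k+2) + Kac (3*k+1) + 2 * Kac (3*k)).
    { replace (3 * S k)%nat with (3*k+3)%nat by lia. apply Kac_rec. }
    assert (E1 : Kac (3 * S k + 1) = Kac (3 * S k) + Kac (3*k+2) + 2 * Kac (3*k+1)).
    { replace (3 * S k + 1)%nat with (3*k+1+3)%nat by lia. rewrite Kac_rec.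
      replace (3*k+1+2)%nat with (3 * S k)%nat by lia.
      replace (3*k+1+1)%nat with (3*k+2)%nat by lia. reflexivity. }
    assert (E2 : Kac (3 * S k + 2) = Kac (3 * S k + 1) + Kac (3 * S k) + 2 * Kac (3*k+2)).
    { replace (3 * S k + 2)%nat with (3*k+2+3)%nat by lia. rewrite Kac_rec.
      replace (3*k+2+2)%nat with (3 * S k + 1)%nat by lia.
      replace (3*k+2+1)%nat with (3 * S k)%nat by lia. reflexivity. }
    rewrite E2, E1, E0, H0, H1, H2. simpl pow. repeat split; field.
Qed.

Lemma Jgen3 j : forall k, Jac (3*k+j) = (2^(j+1)*8^k - Vj j)/7
  /\ Jac (3*k+(j+1)) = (2^(j+2)*8^k - Vj (j+1))/7
  /\ Jac (3*k+(j+2)) = (2^(j+3)*8^k - Vj (j+2))/7.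
Proof.
  induction j as [|j IH]; intro k.
  - destruct (Jk k) as [A [B C]]. rewrite Nat.add_0_r, A. change (0+1)%nat with 1%nat. change (0+2)%nat with 2%nat.
    rewrite B, C. simpl. repeat split; field.
  - destruct (IH k) as [_ [B C]]. destruct (IH (S k)) as [A _].
    replace (S j + 1)%nat with (j+2)%nat by lia.
    replace (3 * k + S j)%nat with (3*k+(j+1))%nat by lia.
    replace (S j + 2)%nat with (j+3)%nat by lia.
    replace (3 * k + (j+3))%nat with (3*S k+j)%nat by lia.
    rewrite A, B, C. repeat split; try (f_equal; f_equal; f_equal; lia).
    replace (Vj (j+3)) with (Vj j).
    2:{ replace (j+3)%nat with (S (S (S j))) by lia. reflexivity. }
    replace (j+3+1)%nat with (S (j+3)) by lia. rewrite !pow_add. simpl. field.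
Qed.

Lemma Jgen k j : Jac (3*k+j) = (2^(j+1)*8^k - Vj j)/7.
Proof. apply Jgen3. Qed.

Lemma Kgen3 j : forall k, Kac (3*k+j) = 2^j*8^k + Wj j
  /\ Kac (3*k+(j+1)) = 2^(j+1)*8^k + Wj (j+1)
  /\ Kac (3*k+(j+2)) = 2^(j+2)*8^k + Wj (j+2).
Proof.
  induction j as [|j IH]; intro k.
  - destruct (Kk k) as [A [B C]]. rewrite Nat.add_0_r, A. change (0+1)%nat with 1%nat. change (0+2)%nat with 2%nat.
    rewrite B, C. simpl. repeat split; field.
  - destruct (IH k) as [_ [B C]]. destruct (IH (S k)) as [A _].
    replace (S j + 1)%nat with (j+2)%nat by lia.
    replace (3 * k + S j)%nat with (3*k+(j+1))%nat by lia.
    replace (S j + 2)%nat with (j+3)%nat by lia.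
    replace (3 * k + (j+3))%nat with (3*S k+j)%nat by lia.
    rewrite A, B, C. repeat split; try (f_equal; f_equal; f_equal; lia).
    replace (Wj (j+3)) with (Wj j).
    2:{ replace (j+3)%nat with (S (S (S j))) by lia. reflexivity. }
    rewrite !pow_add. simpl. field.
Qed.

Lemma Kgen k j : Kac (3*k+j) = 2^j*8^k + Wj j.
Proof. apply Kgen3. Qed.

Lemma Xgen k j : Xs (3*k+j) = Xs j.
Proof. unfold Xs. replace (3*k+j)%nat with (j + k*3)%nat by lia.
  rewrite Nat.Div0.mod_add. reflexivity. Qed.

Lemma p2 k c : 2^(3*k+c) = 8^k * 2^c.
Proof. rewrite pow_add, pow_mult. replace (2^3) with 8 by (simpl; ring). ring. Qed.

Lemma Xs0 : Xs 0 = 0. Proof. reflexivity. Qed.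
Lemma Xs1 : Xs 1 = 1. Proof. reflexivity. Qed.
Lemma Xs2 : Xs 2 = -1. Proof. reflexivity. Qed.
Lemma Xs3 : Xs 3 = 0. Proof. reflexivity. Qed.
Lemma Xs4 : Xs 4 = 1. Proof. reflexivity. Qed.

Lemma quat_ext a b : q0 a = q0 b -> q1 a = q1 b -> q2 a = q2 b -> q3 a = q3 b -> a = b.
Proof. destruct a, b; simpl; intros; subst; reflexivity. Qed.

Ltac finish k :=
  unfold JG, KG, Y1, Y1s;
  rewrite <- ?Nat.add_assoc; set (p := (3*k)%nat); simpl plus; unfold p;
  rewrite ?Jgen, ?Kgen, ?Xgen, ?p2, ?Xs0, ?Xs1, ?Xs2, ?Xs3, ?Xs4;
  set (P := 8^k);
  split; apply quat_ext;
  cbn [Xi Xis Theta qA qB qC qD Omega qsub qadd qopp qscal qmul q0 q1 q2 q3 Vj Wj pow Nat.add];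
  field.

Theorem corollary3p3 (l1 l2 l3 : R) (n : nat) (hn : (1 <= n)%nat) :
  qsub (qmul l1 l2 l3 (JG (n+1)) (JG (n-1))) (qmul l1 l2 l3 (JG n) (JG n))
  = qscal (/ 49)
      (qsub (qscal (2 ^ n)
               (qsub (qscal 2 (qmul l1 l2 l3 Theta (Y1 (n-1))))
                     (qmul l1 l2 l3 (Y1 n) Theta)))
            (qadd (Xi l1 l2 l3) (qscal 14 (Omega l1 l2 l3))))
  /\
  qsub (qmul l1 l2 l3 (KG (n+1)) (KG (n-1))) (qmul l1 l2 l3 (KG n) (KG n))
  = qsub (qscal (2 ^ (n-1))
            (qsub (qscal 2 (qmul l1 l2 l3 Theta (Y1s (n-1))))
                  (qmul l1 l2 l3 (Y1s n) Theta)))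
         (qadd (Xis l1 l2 l3) (qscal 6 (Omega l1 l2 l3))).
Proof.
  assert (Hk : exists k c, n = (3*k + c)%nat /\ (c = 1 \/ c = 2 \/ c = 3)%nat).
  { exists ((n-1)/3)%nat, (1 + (n-1) mod 3)%nat.
    pose proof (Nat.div_mod_eq (n-1) 3). pose proof (Nat.mod_upper_bound (n-1) 3).
    split; lia. }
  destruct Hk as [k [c [-> Hc]]].
  destruct Hc as [-> | [-> | ->]].
  - replace (3*k+1-1)%nat with (3*k+0)%nat by lia. finish k.
  - replace (3*k+2-1)%nat with (3*k+1)%nat by lia. finish k.
  - replace (3*k+3-1)%nat with (3*k+2)%nat by lia. finish k.
Qed.
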